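(* Let $n\in\mathbb N^+$. For every $N\in\mathbb N^+$, no solution $k$ of $$-\frac{1}{2^{n+1}-1}\tan\Big(\frac k2\Big)=\tan(Nk),\qquad k\in(0,\pi),$$ lies in $\pi\mathbb Q$. *)

(* Defs.v *)
From Stdlib Require Import Reals QArith.
Open Scope R_scope.

Definition in_piQ (k : R) : Prop :=
  exists (p : Z) (q : positive), k = PI * (IZR p / IZR (Zpos q)).

(* Main.v *)
Require Import Defs.
From Stdlib Require Import Reals QArith.
From mathcomp Require all_boot all_order all_algebra ring lra zify Rstruct complex.

Module MC.
Set Warnings "-notation-overridden -ambiguous-paths".
Import all_boot all_order all_algebra ring lra zify Rstruct complex.
Import GRing.Theory Num.Theory.
Local Open Scope ring_scope.

Section Core.
Variable K : numFieldType.
Definition Int (x : K) := integralOver (intr : {rmorphism int -> K}) x.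

Lemma L1 (y : K) (r : nat) : Int y -> 2 * y = r%:R -> odd r -> False.
Proof.
case=> p mon_p /rootP; rewrite horner_coef (size_map_inj_poly (@intr_inj K)) // => H2 Hy Hodd.
have p0 : p != 0 by apply: monic_neq0.
have [d sp] : {d | size p = d.+1}.
  by exists (size p).-1; rewrite prednK // size_poly_gt0.
have key : \sum_(i < d.+1) ((p`_i * (r%:Z)^+i * 2^+(d-i))%:~R : K) = 0.
  apply: (etrans _ (mulr0 (2^+d))); rewrite -[X in _ = _ * X]H2 sp mulr_sumr.
  apply: eq_bigr => i _.
  rewrite coef_map_id0 ?mulr0z //= !rmorphM /= !rmorphXn /=.
  have lei : (i <= d)%N by rewrite -ltnS.
  have e : 2^+d = 2^+(d-i) * 2^+i :> K by rewrite -exprD subnK.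
  have e2 : (2%:Z)%:~R = 2 :> K by [].
  rewrite e2 e -pmulrn -Hy exprMn.
  move: (2 ^+ (d - i)) (2 ^+ i) (y ^+ i) ((p`_i)%:~R) => a b c f; ring.
rewrite -rmorph_sum /= in key; move/eqP: key; rewrite intr_eq0 big_ord_recr /=.
have -> : p`_d = 1 by move/monicP: mon_p; rewrite /lead_coef sp.
rewrite subnn expr0 mul1r mulr1.
have -> : \sum_(i < d) p`_i * (r%:Z) ^+ i * 2 ^+ (d - i) =
          2 * \sum_(i < d) p`_i * (r%:Z) ^+ i * 2 ^+ (d - i).-1.
  rewrite mulr_sumr; apply: eq_bigr => i _.
  rewrite mulrCA; congr (_ * _); rewrite -exprS prednK // subn_gt0 //.
rewrite addr_eq0 => /eqP /(congr1 absz).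
rewrite abszN abszM abszX /= => /(congr1 odd).
by rewrite oddM /= oddX Hodd orbT.
Qed.

Lemma Int_nat k : Int k%:R.
Proof. exact: integral_nat. Qed.

Lemma L2 t : forall (r : nat) (x : K), (0 < r)%N -> (r < 2 ^ t)%N -> Int x ->
  2 ^+ t * x = r%:R -> False.
Proof.
elim: t => [|t IH] r x r0 rt Ix E; first by rewrite expn0 in rt; lia.
case Hr: (odd r).
  apply: (@L1 (2 ^+ t * x) r) => //; last by rewrite mulrA -exprS.
  by apply: integral_mul => //; rewrite -natrX; apply: Int_nat.
have Hr2 : r = (r./2).*2 by rewrite -{1}(odd_double_half r) Hr.
apply: (IH r./2 x) => //.
- by move: r0; rewrite Hr2; case: (r./2).
- by move: rt; rewrite {1}Hr2 expnS mul2n ltn_double.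
- apply: (@mulfI K 2); first by rewrite pnatr_eq0.
  by rewrite mulrA -exprS E {1}Hr2 -mul2n natrM.
Qed.

Lemma pow_aux s : (2 <= s)%N -> (s.+1 < 2^s)%N.
Proof.
elim: s => // s IH; rewrite ltnS leq_eqVlt => /orP[/eqP <- //|/IH h].
by rewrite expnS; lia.
Qed.

Lemma aux2 n s : (0 < n)%N -> (0 < s)%N -> ~~ ((n == 1%N) && (s == 1%N)) ->
  (s.+1 < 2^(n*s))%N.
Proof.
move=> n0 s0 H.
have [s1|s2] := leqP s 1.
  have e : s = 1%N by lia.
  move: H; rewrite e eqxx andbT muln1 => H.
  have n2 : (2 <= n)%N by lia.
  by apply: (leq_trans _ (leq_pexp2l _ n2)).
apply: (leq_trans (@pow_aux s s2)); apply: leq_pexp2l => //; rewrite leq_pmull //.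
Qed.


Lemma Int_root (z : K) m : (0 < m)%N -> z ^+ m = 1 -> Int z.
Proof.
move=> m0 zm; exists ('X^m - 1); first by rewrite -(rmorph1 polyC) monicXnsubC.
by rewrite rmorphB /= map_polyXn rmorph1 /root !hornerE zm subrr.
Qed.

Lemma Int_sum I (r : seq I) (P : pred I) (F : I -> K) :
  (forall i, Int (F i)) -> Int (\sum_(i <- r | P i) F i).
Proof.
move=> H; apply: (big_ind Int) => //; first exact: integral0.
by move=> a b; apply: integral_add.
Qed.

Lemma Int_prod I (r : seq I) (P : pred I) (F : I -> K) :
  (forall i, Int (F i)) -> Int (\prod_(i <- r | P i) F i).
Proof.
move=> H; apply: (big_ind Int) => //; first exact: integral1.
by move=> a b; apply: integral_mul.
Qed.

Lemma Int_X x k : Int x -> Int (x ^+ k).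
Proof.
move=> Ix; elim: k => [|k IH]; first by rewrite expr0; exact: integral1.
by rewrite exprS; apply: integral_mul.
Qed.

Lemma prod_prim (e : K) r : r.-primitive_root e ->
  \prod_(1 <= i < r) (1 - e ^+ i) = r%:R.
Proof.
move=> pe; have r0 := prim_order_gt0 pe.
have F := factor_Xn_sub_1 pe.
rewrite big_ltn // expr0 in F.
have G : 'X^r - 1 = ('X - 1) * \sum_(i < r) 'X ^+ (r.-1 - i) :> {poly K}.
  by rewrite -[1 in LHS](expr1n _ r) subrXX; congr (_ * _); apply: eq_bigr => i _; rewrite expr1n mulr1.
rewrite G in F; move/mulfI: F => F.
have {}F : \prod_(1 <= i < r) ('X - (e ^+ i)%:P) = \sum_(i < r) 'X ^+ (r.-1 - i) :> {poly K}.
  by apply: F; rewrite polyXsubC_eq0.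
transitivity (\prod_(1 <= i < r) ('X - (e ^+ i)%:P)).[1].
  by rewrite horner_prod; apply: eq_bigr => i _; rewrite !hornerE.
rewrite F horner_sum.
rewrite (eq_bigr (fun _ => 1)); last by move=> i _; rewrite !hornerE ?expr1n.
by rewrite sumr_const card_ord.
Qed.

Lemma core (z : K) (m n N : nat) : (0 < m)%N -> (0 < n)%N -> (0 < N)%N ->
  z ^+ m = 1 -> z != 1 -> z != -1 ->
  2 ^+ n * (z ^+ (2 * N).+1 - 1) = (2 ^+ n - 1) * (z - z ^+ (2 * N)) -> False.
Proof.
move=> m0 n0 N0 zm z1 zN1 E.
set A : K := 2 ^+ n.
have A0 : A != 0 by rewrite /A expf_neq0 // pnatr_eq0.
set M := (2 * N).-1.
have hM : (2 * N)%N = M.+1 by rewrite /M prednK // muln_gt0.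
set e := z ^+ M.
have e2N : z ^+ (2 * N) = z * e by rewrite hM exprS.
have e2N1 : z ^+ (2 * N).+1 = z * z * e by rewrite exprS e2N mulrA.
rewrite e2N1 e2N -/A in E.
have Iz := @Int_root z m m0 zm.
set u := z ^+ m.-1.
have zu : z * u = 1 by rewrite /u -exprS prednK.
set w := (1 - e) - (z * z * e - 1) * u.
have Iw : Int w.
  have Ie : Int e by apply: Int_X.
  have Iu : Int u by apply: Int_X.
  rewrite /w; apply: integral_sub; first by apply: integral_sub => //; exact: integral1.
  apply: integral_mul => //; apply: integral_sub; last exact: integral1.
  by do 2! apply: integral_mul => //.
have hw : 1 - e = A * w.
  have h1 : A * ((z * z * e - 1) * u) = (A - 1) * (1 - e) * (z * u).
    by rewrite mulrA E; ring.
  by rewrite /w mulrBr h1 zu; ring.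
have em : e ^+ m = 1 by rewrite /e exprAC zm expr1n.
have [r pe _] := prim_order_exists m0 em.
have r0 := prim_order_gt0 pe.
have [r1|r2] := leqP r 1.
  have r1' : r = 1%N by lia.
  have e1 : e = 1 by rewrite -(expr1 e) -r1' (prim_expr_order pe).
  rewrite e1 !mulr1 subrr mulr0 in E.
  move/eqP: E; rewrite mulf_eq0 (negbTE A0) /= subr_eq0 -subr_eq0.
  have -> : z * z - 1 = (z - 1) * (z + 1) by ring.
  rewrite mulf_eq0 subr_eq0 (negbTE z1) /= addr_eq0 (negbTE zN1) //.
pose S i := \sum_(l < i) 1 ^+ (i.-1 - l) * e ^+ l.
have P := @prod_prim e r pe.
have P2 : r%:R = A ^+ (r - 1) * \prod_(1 <= i < r) (w * S i).
  rewrite -P -prodr_const_nat -big_split /=; apply: eq_bigr => i _.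
  by rewrite /S -(expr1n _ i) subrXX hw expr1n mulrA.
have IP : Int (\prod_(1 <= i < r) (w * S i)).
  by apply: Int_prod => i; apply: integral_mul => //; apply: Int_sum => l;
     apply: integral_mul; apply: Int_X => //; [exact: integral1 | exact: Int_X].
rewrite /A -exprM in P2.
case H: ((n == 1%N) && ((r - 1)%N == 1%N)); last first.
  apply: (@L2 (n * (r - 1))%N r (\prod_(1 <= i < r) (w * S i))) => //. 
  have := @aux2 n (r - 1) n0; rewrite H subn_gt0 => /(_ r2 isT).
  by have -> : (r - 1).+1 = r by lia.
move/andP: H => [/eqP n1 /eqP r2'].
have r2e : r = 2%N by lia.
rewrite r2e in pe.
have ne1 : e != 1 by rewrite -{1}(expr1 e) -(prim_order_dvd pe).
have e2 : e ^+ 2 = 1 by apply: (prim_expr_order pe).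
have eN1 : e = -1.
  apply/eqP; rewrite -addr_eq0; have : (e - 1) * (e + 1) == 0.
    have -> : (e - 1) * (e + 1) = e ^+ 2 - 1 by ring.
    by rewrite e2 subrr.
  by rewrite mulf_eq0 subr_eq0 (negbTE ne1).
have A2 : A = 2 by rewrite /A n1 expr1.
rewrite eN1 A2 in E.
have z3 : z ^+ 3 = 1.
  have h : 2 * (z * z + z + 1) = 0.
    have -> : 2 * (z * z + z + 1) = (2 - 1) * (z - z * -1) - 2 * (z * z * -1 - 1) by ring.
    by rewrite E subrr.
  move/eqP: h; rewrite mulf_eq0 pnatr_eq0 /= => /eqP h.
  apply/eqP; rewrite -subr_eq0; apply/eqP.
  have -> : z ^+ 3 - 1 = (z - 1) * (z * z + z + 1) by ring.
  by rewrite h mulr0.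
have : e ^+ 3 = 1 by rewrite /e exprAC z3 expr1n.
rewrite eN1 => /eqP; rewrite -subr_eq0.
have -> : (-1) ^+ 3 - 1 = - 2 :> K by ring.
by rewrite oppr_eq0 pnatr_eq0.
Qed.
End Core.

Local Open Scope complex_scope.
Lemma mulE (a b c d : R) : (a +i* b) * (c +i* d) = (a*c - b*d) +i* (a*d + b*c). Proof. by []. Qed.
Lemma addE (a b c d : R) : (a +i* b) + (c +i* d) = (a+c) +i* (b+d). Proof. by []. Qed.
Lemma oppE (a b : R) : - (a +i* b) = (-a) +i* (-b). Proof. by []. Qed.
Lemma oneE : 1 = (GRing.one R) +i* 0. Proof. by []. Qed.
Lemma eq_by (x y x' y' : R) : x = x' -> y = y' -> x' = y' -> x = y.
Proof. by move=> -> ->. Qed.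

Lemma dm (k : R) j : (cos k +i* sin k) ^+ j = cos (INR j * k) +i* sin (INR j * k).
Proof.
elim: j => [|j IH]; first by rewrite expr0 Rmult_0_l cos_0 sin_0.
rewrite exprSr IH mulE S_INR Rmult_plus_distr_r Rmult_1_l cos_plus sin_plus.
by rewrite ?RmultE ?RminusE ?RplusE; congr (_ +i* _); ring.
Qed.

Lemma twoC n : (2 : R[i]) ^+ n = ((2%:R : R) ^+ n) +i* 0.
Proof. by rewrite complexr0 rmorphXn /= (rmorph_nat (real_complex R) 2). Qed.

Lemma bridge_gen (n N m : nat) (k : R) (core : forall z : R[i], z ^+ m = 1 -> z != 1 -> z != -1 ->
  2 ^+ n * (z ^+ (2 * N).+1 - 1) = (2 ^+ n - 1) * (z - z ^+ (2 * N)) -> False) :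
  cos (INR m * k) = 1 -> sin (INR m * k) = 0 -> sin k <> 0 ->
  (2 ^+ n) * (cos (INR (2*N).+1 * k) - 1) = (2 ^+ n - 1) * (cos k - cos (INR (2*N) * k)) ->
  (2 ^+ n) * sin (INR (2*N).+1 * k) = (2 ^+ n - 1) * (sin k - sin (INR (2*N) * k)) -> False.
Proof.
move=> cm sm sk HRe HIm.
apply: (core (cos k +i* sin k)).
- by rewrite dm cm sm.
- by apply/eqP => -[_ h]; apply: sk.
- apply/eqP => -[_ h]; apply: sk; rewrite h; exact: oppr0.
- rewrite !dm twoC oneE !oppE !addE !mulE.
  congr (_ +i* _).
  + by rewrite !subr0 !mul0r !subr0.
  + by rewrite !subr0 !mul0r !addr0.
Qed.

Lemma final (n N m : nat) (k : R) : lt O m -> lt O n -> lt O N ->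
  cos (Rmult (INR m) k) = IZR (Zpos xH) -> sin (Rmult (INR m) k) = IZR Z0 ->
  sin k <> IZR Z0 ->
  Rmult (pow (IZR (Zpos (xO xH))) n) (Rminus (cos (Rmult (INR (S (Nat.mul 2 N))) k)) (IZR (Zpos xH)))
  = Rmult (Rminus (pow (IZR (Zpos (xO xH))) n) (IZR (Zpos xH))) (Rminus (cos k) (cos (Rmult (INR (Nat.mul 2 N)) k))) ->
  Rmult (pow (IZR (Zpos (xO xH))) n) (sin (Rmult (INR (S (Nat.mul 2 N))) k))
  = Rmult (Rminus (pow (IZR (Zpos (xO xH))) n) (IZR (Zpos xH))) (Rminus (sin k) (sin (Rmult (INR (Nat.mul 2 N)) k))) ->
  False.
Proof.
move=> /ltP m0 /ltP n0 /ltP N0 cm sm sk.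
rewrite !RpowE => HRe HIm.
apply: (@bridge_gen n N m k _ cm sm sk HRe HIm).
by move=> z; apply: (@core _ z m n N).
Qed.
End MC.

From Stdlib Require Import Lra Lia.

Open Scope R_scope.

Lemma cs_2piZ (p : Z) : cos (2 * PI * IZR p) = 1 /\ sin (2 * PI * IZR p) = 0.
Proof.
  assert (H : forall n : nat, cos (2 * PI * INR n) = 1 /\ sin (2 * PI * INR n) = 0).
  { intro n0. replace (2 * PI * INR n0) with (0 + 2 * INR n0 * PI) by ring.
    rewrite cos_period, sin_period, cos_0, sin_0. split; reflexivity. }
  destruct p as [|p|p].
  - replace (2 * PI * IZR 0) with 0 by (simpl; ring). rewrite cos_0, sin_0. split; reflexivity.
  - replace (IZR (Zpos p)) with (INR (Pos.to_nat p)) by (rewrite INR_IPR; reflexivity). apply H.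
  - replace (IZR (Zneg p)) with (- INR (Pos.to_nat p)) by (rewrite INR_IPR; reflexivity).
    replace (2 * PI * - INR (Pos.to_nat p)) with (- (2 * PI * INR (Pos.to_nat p))) by ring.
    rewrite cos_neg, sin_neg. destruct (H (Pos.to_nat p)) as [H1 H2]. rewrite H1, H2. split; [reflexivity|ring].
Qed.

Theorem lemma23 (n N : nat) (hn : (1 <= n)%nat) (hN : (1 <= N)%nat) (k : R) :
  0 < k < PI ->
  cos (INR N * k) <> 0 ->
  - (1 / (2 ^ (n + 1) - 1)) * tan (k / 2) = tan (INR N * k) ->
  ~ in_piQ k.
Proof.
  intros Hk Hcy Htan [p [q Hkq]].
  assert (Hq : IZR (Zpos q) <> 0).
  { apply not_0_IZR. discriminate. }
  set (m := (2 * Pos.to_nat q)%nat).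
  assert (Hmk : INR m * k = 2 * PI * IZR p).
  { unfold m. rewrite mult_INR, INR_IPR, Hkq. change (IPR q) with (IZR (Zpos q)).
    simpl (INR 2). field. exact Hq. }
  destruct (cs_2piZ p) as [Hc1 Hs1].
  assert (Hsk : sin k <> 0).
  { apply Rgt_not_eq. apply sin_gt_0; tauto. }
  set (x := k / 2) in *.
  set (y := INR N * k) in *.
  assert (ek : k = 2 * x) by (unfold x; field).
  assert (Hcx : 0 < cos x).
  { apply cos_gt_0; unfold x; destruct Hk; lra. }
  set (A := 2 ^ n).
  assert (HA : 2 ^ (n + 1) = 2 * A).
  { unfold A. rewrite pow_add. simpl. ring. }
  rewrite HA in Htan.
  assert (Ha : 2 * A - 1 > 0).
  { assert (1 <= A). { unfold A. apply pow_R1_Rle. lra. } lra. }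
  assert (H0 : sin x * cos y + (2 * A - 1) * cos x * sin y = 0).
  { unfold tan in Htan.
    replace (sin x * cos y + (2 * A - 1) * cos x * sin y)
      with ((2 * A - 1) * cos x * cos y * (- (- (1 / (2 * A - 1)) * (sin x / cos x)) + sin y / cos y))
      by (field; repeat split; lra || auto).
    rewrite Htan. ring. }
  assert (e1 : INR (S (2 * N)) * k = 2 * y + 2 * x).
  { rewrite S_INR, mult_INR. unfold y. rewrite ek. simpl (INR 2). ring. }
  assert (e2 : INR (2 * N) * k = 2 * y).
  { rewrite mult_INR. unfold y. simpl (INR 2). ring. }
  assert (hP : sin x * sin x + cos x * cos x = 1).
  { pose proof (sin2_cos2 x) as h. unfold Rsqr in h. exact h. }
  assert (hQ : sin y * sin y + cos y * cos y = 1).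
  { pose proof (sin2_cos2 y) as h. unfold Rsqr in h. exact h. }
  assert (HRe : A * (cos (INR (S (2 * N)) * k) - 1) = (A - 1) * (cos k - cos (INR (2 * N) * k))).
  { rewrite e1, e2, ek, cos_plus, !cos_2a, !sin_2a.
    assert (Hid : A * ((cos y * cos y - sin y * sin y) * (cos x * cos x - sin x * sin x)
        - 2 * sin y * cos y * (2 * sin x * cos x)
        - (sin x * sin x + cos x * cos x) * (sin y * sin y + cos y * cos y))
      - (A - 1) * ((cos x * cos x - sin x * sin x) * (sin y * sin y + cos y * cos y)
        - (cos y * cos y - sin y * sin y) * (sin x * sin x + cos x * cos x))
      = -2 * (sin x * cos y + cos x * sin y) * (sin x * cos y + (2 * A - 1) * cos x * sin y)) by ring.
    rewrite hP, hQ, H0 in Hid. lra. }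
  assert (HIm : A * sin (INR (S (2 * N)) * k) = (A - 1) * (sin k - sin (INR (2 * N) * k))).
  { rewrite e1, e2, ek, sin_plus, !cos_2a, !sin_2a.
    assert (Hid : A * (2 * sin y * cos y * (cos x * cos x - sin x * sin x)
        + (cos y * cos y - sin y * sin y) * (2 * sin x * cos x))
      - (A - 1) * (2 * sin x * cos x * (sin y * sin y + cos y * cos y)
        - 2 * sin y * cos y * (sin x * sin x + cos x * cos x))
      = 2 * (cos x * cos y - sin x * sin y) * (sin x * cos y + (2 * A - 1) * cos x * sin y)) by ring.
    rewrite hP, hQ, H0 in Hid. lra. }
  apply (MC.final n N m k).
  - unfold m. pose proof (Pos2Nat.is_pos q). lia.
  - lia.
  - lia.
  - rewrite Hmk. exact Hc1.
  - rewrite Hmk. exact Hs1.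
  - exact Hsk.
  - exact HRe.
  - exact HIm.
Qed.
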